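(* Let $(M,g_M,J)$ be an almost Hermitian manifold, $(N,g_N)$ a Riemannian manifold, and $F:(M,g_M,J)\to(N,g_N)$ a v-semi-slant submersion with v-semi-slant angle $\theta\in[0,\frac{\pi}{2})$. Then $N$ is even-dimensional.
   Context: A Riemannian submersion $F:(M,g_M)\to(N,g_N)$ is a smooth submersion whose differential $F_*$ preserves the lengths of horizontal vectors, i.e. vectors in $(\ker F_* )^\perp$. $F$ is a v-semi-slant submersion if there is a distribution $\mathcal{D}_1\subset(\ker F_* )^\perp$ with $J(\mathcal{D}_1)=\mathcal{D}_1$ such that, letting $\mathcal{D}_2$ be the orthogonal complement of $\mathcal{D}_1$ in $(\ker F_* )^\perp$, the angle $\theta(X)$ between $JX$ and the space $(\mathcal{D}_2)_p$ is the same constant $\theta$ for all nonzero $X\in(\mathcal{D}_2)_p$ and all $p\in M$; $\theta$ is the v-semi-slant angle. *)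

(* Defs.v *)
From HB Require Import structures.
From mathcomp Require Import all_boot all_order all_algebra.
From mathcomp Require Import all_classical all_reals all_analysis.
Set Implicit Arguments. Unset Strict Implicit. Unset Printing Implicit Defensive.
Import Order.TTheory GRing.Theory Num.Theory.
Local Open Scope ring_scope.

Section VSemiSlant.
Variable R : realType.

Definition gform (k : nat) (G : 'M[R]_k) (u v : 'rV[R]_k) : R :=
  (u *m G *m v^T) 0 0.

Definition is_inner_product (k : nat) (G : 'M[R]_k) : Prop :=
  G^T = G /\ forall u : 'rV[R]_k, u != 0 -> 0 < gform G u u.

Definition glen (k : nat) (G : 'M[R]_k) (u : 'rV[R]_k) : R :=
  Num.sqrt (gform G u u).

Definition almost_hermitian_at (m : nat) (G J : 'M[R]_m) : Prop :=
  is_inner_product G /\ J *m J = - 1%:M /\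
  forall u v : 'rV[R]_m, gform G (u *m J) (v *m J) = gform G u v.

Definition vertical (m n : nat) (dF : 'M[R]_(m, n)) (u : 'rV[R]_m) : Prop :=
  u *m dF = 0.

Definition horizontal (m n : nat) (G : 'M[R]_m) (dF : 'M[R]_(m, n))
    (u : 'rV[R]_m) : Prop :=
  forall v, vertical dF v -> gform G u v = 0.

Definition angle_vec_subspace (m : nat) (G : 'M[R]_m) (w : 'rV[R]_m)
    (S : 'rV[R]_m -> Prop) (theta : R) : Prop :=
  0 <= theta <= pi / 2 /\
  exists P : 'rV[R]_m, S P /\ (forall Y, S Y -> gform G (w - P) Y = 0) /\
    glen G P = cos theta * glen G w.

Definition D2_of (m n : nat) (G : 'M[R]_m) (dF : 'M[R]_(m, n))
    (D1 : 'M[R]_m) (u : 'rV[R]_m) : Prop :=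
  horizontal G dF u /\ forall v, (v <= D1)%MS -> gform G u v = 0.

End VSemiSlant.

(* A Riemannian submersion F : M -> N, modelled pointwise: at each p : M,
   g_M(p) = GM p, J(p) = J p, F_*p = dF p (as an m x n matrix acting on row
   vectors), g_N(F p) = GN (F p). *)
Definition riemannian_submersion (R : realType) (M N : Type) (m n : nat)
    (GM : M -> 'M[R]_m) (GN : N -> 'M[R]_n) (F : M -> N)
    (dF : M -> 'M[R]_(m, n)) : Prop :=
  (forall q : N, is_inner_product (GN q)) /\
  forall p : M,
    \rank (dF p) = n /\
    forall u, horizontal (GM p) (dF p) u ->
      gform (GN (F p)) (u *m dF p) (u *m dF p) = gform (GM p) u u.

Definition v_semi_slant (R : realType) (M N : Type) (m n : nat)
    (GM : M -> 'M[R]_m) (J : M -> 'M[R]_m) (GN : N -> 'M[R]_n) (F : M -> N)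
    (dF : M -> 'M[R]_(m, n)) (theta : R) : Prop :=
  riemannian_submersion GM GN F dF /\
  exists D1 : M -> 'M[R]_m,
    forall p : M,
      (forall u, (u <= D1 p)%MS -> horizontal (GM p) (dF p) u) /\
      (D1 p *m J p == D1 p)%MS /\
      forall X, D2_of (GM p) (dF p) (D1 p) X -> X != 0 ->
        angle_vec_subspace (GM p) (X *m J p) (D2_of (GM p) (dF p) (D1 p)) theta.

(* Main.v *)
Require Import Defs.
From HB Require Import structures.
From mathcomp Require Import all_boot all_order all_algebra.
From mathcomp Require Import all_classical all_reals all_analysis.
Import Order.TTheory GRing.Theory Num.Theory.
Local Open Scope ring_scope.

Section Aux.
Variable R : realType.

Lemma gformBl k (G : 'M[R]_k) (u v w : 'rV[R]_k) :
  gform G (u - v) w = gform G u w - gform G v w.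
Proof. by rewrite /gform !mulmxBl mxE [X in _ + X]mxE. Qed.

Lemma gformNl k (G : 'M[R]_k) (u w : 'rV[R]_k) : gform G (- u) w = - gform G u w.
Proof. by rewrite /gform !mulNmx mxE. Qed.

Lemma gformC k (G : 'M[R]_k) (u v : 'rV[R]_k) : G^T = G -> gform G u v = gform G v u.
Proof.
move=> GT; rewrite /gform.
have <- : (u *m G *m v^T)^T = v *m G *m u^T.
  by rewrite !trmx_mul trmxK GT mulmxA.
by rewrite [RHS]mxE.
Qed.

Lemma entry_e k l (i : 'I_k) (j : 'I_l) (A : 'M[R]_(k, l)) :
  ((delta_mx 0 i : 'rV[R]_k) *m A *m (delta_mx 0 j : 'rV[R]_l)^T) 0 0 = A i j.
Proof. by rewrite -rowE trmx_delta -colE !mxE. Qed.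

Lemma horiz_sub m n (G : 'M[R]_m) (D : 'M[R]_(m, n)) (u : 'rV[R]_m) :
  G \in unitmx -> \rank D = n -> horizontal G D u ->
  (u <= D^T *m invmx G)%MS.
Proof.
move=> Gu rk Hu.
set w := u *m G.
have wK : w *m (kermx D)^T = 0.
  apply/matrixP => i j; rewrite ord1 !mxE.
  have := Hu (row j (kermx D)).
  rewrite /vertical /gform => /(_ _).
  have -> : row j (kermx D) *m D = 0.
    by apply/sub_kermxP; apply: row_sub.
  move=> /(_ erefl) H0; rewrite -[RHS]H0 -/w mxE.
  by apply: eq_bigr => k _; rewrite !mxE.
have wsub : (w <= kermx (kermx D)^T)%MS by apply/sub_kermxP.
have Dsub : (D^T <= kermx (kermx D)^T)%MS.
  by apply/sub_kermxP; rewrite -trmx_mul mulmx_ker trmx0.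
have eq : (D^T == kermx (kermx D)^T)%MS.
  rewrite -(mxrank_leqif_eq Dsub) mxrank_ker mxrank_tr mxrank_ker mxrank_tr.
  by rewrite subKn ?rank_leq_row // rk.
have /submxP [z Hz] : (w <= D^T)%MS.
  by apply: (submx_trans wsub); move/eqmxP: eq => ->.
have -> : u = u *m G *m invmx G by rewrite -mulmxA mulmxV // mulmx1.
by rewrite -/w Hz -mulmxA submxMl.
Qed.

End Aux.

Theorem theorem3p10 (R : realType) (M N : Type) (m n : nat) (p0 : M)
    (GM : M -> 'M[R]_m) (J : M -> 'M[R]_m) (GN : N -> 'M[R]_n)
    (F : M -> N) (dF : M -> 'M[R]_(m, n)) (theta : R) :
  (forall p : M, almost_hermitian_at (GM p) (J p)) ->
  0 <= theta < pi / 2 ->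
  v_semi_slant GM J GN F dF theta ->
  ~~ odd n.
Proof.
move=> AH /andP [th0 th1] [[GNip RS] [D1 HD]].
have [[GT Gpos] [JJ Jinv]] := AH p0.
have [rk _] := RS p0.
have [D1H [D1J Hsl]] := HD p0.
set G := GM p0 in GT Gpos Jinv D1H Hsl *; set Jp := J p0 in JJ Jinv D1J Hsl *.
set D := dF p0 in rk D1H Hsl *.
have Gu : G \in unitmx.
  rewrite -row_free_unit; apply: inj_row_free => v Hv; apply/eqP.
  apply: contraT => nz; have := Gpos v nz.
  by rewrite /gform Hv mul0mx mxE ltxx.
have skew : forall a b, gform G (a *m Jp) b = - gform G a (b *m Jp).
  by move=> a b; rewrite -Jinv -mulmxA JJ mulmxN mulmx1 gformNl.
set B := D^T *m invmx G.
have Bfree : row_free B.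
  by rewrite /row_free mxrankMfree ?row_free_unit ?unitmx_inv // mxrank_tr rk.
have Hsub : forall u, horizontal G D u -> (u <= B)%MS.
  by move=> u; apply: horiz_sub.
apply/negP => nodd.
set A := B *m Jp *m G *m B^T.
have Aent : forall i j, A i j = gform G ((delta_mx 0 i : 'rV[R]_n) *m B *m Jp) ((delta_mx 0 j : 'rV[R]_n) *m B).
  by move=> i j; rewrite -entry_e /A /gform [X in _ = (_ *m X) 0 0]trmx_mul !mulmxA.
have AT : A^T = - A.
  apply/matrixP => i j; rewrite [LHS]mxE [RHS]mxE !Aent gformC // skew opprK.
  by rewrite gformC.
have detA : \det A = 0.
  have : \det A = - \det A.
    by rewrite -[LHS]det_tr AT -scaleN1r detZ -signr_odd nodd expr1 mulN1r.
  move=> h; apply/eqP.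
  have : \det A *+ 2 == 0 by rewrite mulr2n {1}h addNr.
  by rewrite mulrn_eq0.
have [c cnz cA] : exists2 c : 'rV[R]_n, c != 0 & c *m A = 0.
  by apply/det0P; rewrite detA.
set X := c *m B.
have Xnz : X != 0 by rewrite /X mulmx_free_eq0.
have XJorth : forall Y, (Y <= B)%MS -> gform G (X *m Jp) Y = 0.
  move=> Y /submxP [d ->]; rewrite /gform trmx_mul /X !mulmxA.
  by move: cA; rewrite /A !mulmxA => ->; rewrite mul0mx mxE.
have Xh : horizontal G D X.
  move=> v; rewrite /vertical => Hv.
  rewrite /gform /X /B -!mulmxA [invmx G *m _]mulmxA mulVmx // mul1mx -trmx_mul Hv trmx0.
  by rewrite mulmx0 mxE.
have XD2 : D2_of G D (D1 p0) X.
  split => // Y HY.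
  rewrite -Jinv XJorth //; apply: Hsub; apply: D1H.
  by apply: (submx_trans (submxMr _ HY)); case/andP: D1J.
have [_ [P [P2 [Porth Plen]]]] := Hsl X XD2 Xnz.
have PP : gform G P P = 0.
  have := Porth P P2; rewrite gformBl XJorth ?sub0r; last by apply: Hsub; case: P2.
  by move/eqP; rewrite oppr_eq0 => /eqP.
have XJnz : X *m Jp != 0.
  apply: contraNneq Xnz => h.
  have : X *m Jp *m Jp = 0 by rewrite h mul0mx.
  by rewrite -mulmxA JJ mulmxN mulmx1 => /eqP; rewrite oppr_eq0.
have cpos : 0 < cos theta.
  apply: cos_gt0_pihalf; rewrite th1 andbT.
  by apply: (lt_le_trans _ th0); rewrite oppr_lt0 divr_gt0 ?pi_gt0.
have lpos : 0 < glen G (X *m Jp) by rewrite /glen sqrtr_gt0 Gpos.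
move: Plen; rewrite /glen PP sqrtr0 => h.
have := mulr_gt0 cpos lpos; rewrite /glen -h ltxx.
done.
Qed.
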